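(* Let $n\ge 2$, let $\mathcal{S}\subseteq(\mathbb{C}^d)^{\otimes n}$ be the permutation-symmetric subspace, and let $B$ be a $d\times d$ complex matrix with distinct eigenvalues $\lambda_1,\ldots,\lambda_p$ and corresponding generalized eigenspaces $V_1,\ldots,V_p\subseteq\mathbb{C}^d$ (so $\mathbb{C}^d=V_1\oplus\cdots\oplus V_p$). If $|\psi\rangle\in\mathcal{S}$ satisfies $B_{(1)}|\psi\rangle\in\mathcal{S}$, then $$|\psi\rangle\in\bigoplus_{i=1}^p\mathrm{Sym}^n(V_i),$$ where $\mathrm{Sym}^n(V_i)$ denotes the permutation-symmetric subspace of $V_i^{\otimes n}\subseteq(\mathbb{C}^d)^{\otimes n}$.
   Context: $\mathcal{S}$ is the set of vectors in $(\mathbb{C}^d)^{\otimes n}$ invariant under all permutations of the $n$ tensor factors. For a $d\times d$ matrix $Y$, $Y_{(1)}$ denotes $Y\otimes\mathbb{I}\otimes\cdots\otimes\mathbb{I}$ on $(\mathbb{C}^d)^{\otimes n}$. *)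

(* Defs.v *)
From HB Require Import structures.
From mathcomp Require Import all_boot all_order all_algebra all_fingroup.
From mathcomp Require Import complex reals.
Set Implicit Arguments. Unset Strict Implicit. Unset Printing Implicit Defensive.
Import GRing.Theory Num.Theory.
Local Open Scope ring_scope.

(* Computational basis of (C^d)^{\otimes n}: functions f : 'I_n -> 'I_d,
   f k = index of the basis vector in tensor factor k. *)
Notation idx n d := {ffun 'I_n -> 'I_d}.

(* A vector of (F^d)^{\otimes n}: its coefficients in the product basis. *)
Notation tensor F n d := {ffun idx n d -> F}.

Definition permute_idx n d (s : 'S_n) (f : idx n d) : idx n d :=
  [ffun k => f (s k)].

Definition symmetric_tensor (F : nzRingType) n d (psi : tensor F n d) : Prop :=
  forall (s : 'S_n) (f : idx n d), psi (permute_idx s f) = psi f.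

Definition set_idx n d (f : idx n d) (i : 'I_n) (j : 'I_d) : idx n d :=
  [ffun k => if k == i then j else f k].

(* Y acting on tensor factor i (identity on the others):
   Y_(i) = I (x) ... (x) Y (x) ... (x) I. *)
Definition apply_at (F : nzRingType) n d (i : 'I_n) (Y : 'M[F]_d)
  (psi : tensor F n d) : tensor F n d :=
  [ffun f : idx n d => \sum_(j < d) Y (f i) j * psi (set_idx f i j)].

Definition prod_tensor (F : nzRingType) n d (v : 'I_n -> 'cV[F]_d) : tensor F n d :=
  [ffun f : idx n d => \prod_(k < n) v k (f k) 0].

Definition in_tensor_power (F : nzRingType) n d (P : 'cV[F]_d -> Prop)
  (psi : tensor F n d) : Prop :=
  exists (M : nat) (v : 'I_M -> 'I_n -> 'cV[F]_d),
    (forall m k, P (v m k)) /\ psi = \sum_(m < M) prod_tensor (v m).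

Definition in_sym_power (F : nzRingType) n d (P : 'cV[F]_d -> Prop)
  (psi : tensor F n d) : Prop :=
  in_tensor_power P psi /\ symmetric_tensor psi.

Definition gen_eigenspace (F : fieldType) d (B : 'M[F]_d) (a : F)
  (v : 'cV[F]_d) : Prop :=
  exists k : nat, (B - a%:M) ^+ k *m v = 0.

(* Main.v *)
Require Import Defs.
From HB Require Import structures.
From mathcomp Require Import all_boot all_order all_algebra all_fingroup.
From mathcomp Require Import complex reals ring.
Import GRing.Theory Num.Theory.
Local Open Scope ring_scope.

Section Tensor.
Variable F : comNzRingType.
Variables n d : nat.
Implicit Types (psi chi : tensor F n d) (X Y : 'M[F]_d) (f g : idx n d).

Lemma set_idx_at f i j : set_idx f i j i = j.
Proof. by rewrite ffunE eqxx. Qed.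

Lemma set_idx_id f i : set_idx f i (f i) = f.
Proof. by apply/ffunP => k; rewrite ffunE; case: eqP => // ->. Qed.

Lemma set_idx_set f i j l : set_idx (set_idx f i j) i l = set_idx f i l.
Proof. by apply/ffunP => k; rewrite !ffunE; case: eqP. Qed.

Lemma set_idx_ne f i j a (h : i != j) : set_idx f i a j = f j.
Proof. by rewrite ffunE eq_sym (negbTE h). Qed.

Lemma set_idx_C f i j a b : i != j ->
  set_idx (set_idx f i a) j b = set_idx (set_idx f j b) i a.
Proof.
move=> h; apply/ffunP => k; rewrite !ffunE.
case: (eqVneq k j) => [kj|kj]; case: (eqVneq k i) => [ki|ki] //.
by move: h; rewrite -ki -kj eqxx.
Qed.

Lemma apply_atD i X Y psi :
  apply_at i (X + Y) psi = apply_at i X psi + apply_at i Y psi.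
Proof.
apply/ffunP => f; rewrite !ffunE -big_split; apply: eq_bigr => j _.
by rewrite mxE mulrDl.
Qed.

Lemma apply_at_scalar i (c : F) psi : apply_at i c%:M psi = [ffun f => c * psi f].
Proof.
apply/ffunP => f; rewrite !ffunE (bigD1 (f i)) //= big1 ?addr0.
  by rewrite mxE eqxx mulr1n set_idx_id.
by move=> j hj; rewrite mxE eq_sym (negbTE hj) mulr0n mul0r.
Qed.

Lemma apply_at_sumX i (I : finType) (P : I -> 'M[F]_d) psi :
  apply_at i (\sum_k P k) psi = \sum_k apply_at i (P k) psi.
Proof.
apply/ffunP => f; rewrite !ffunE sum_ffunE.
rewrite (eq_bigr (fun k => \sum_(j < d) P k (f i) j * psi (set_idx f i j))).
  2: by move=> k _; rewrite ffunE.
rewrite exchange_big; apply: eq_bigr => j _.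
by rewrite summxE mulr_suml.
Qed.

Lemma apply_at_mul i X Y psi :
  apply_at i X (apply_at i Y psi) = apply_at i (X *m Y) psi.
Proof.
apply/ffunP => f; rewrite !ffunE.
rewrite (eq_bigr (fun j => \sum_(l < d) X (f i) j * Y j l * psi (set_idx f i l))).
  2: by move=> j _; rewrite ffunE mulr_sumr; apply: eq_bigr => l _;
        rewrite set_idx_at set_idx_set mulrA.
rewrite exchange_big; apply: eq_bigr => l _.
by rewrite mxE mulr_suml.
Qed.

Lemma apply_at_comm i j X Y psi : i != j ->
  apply_at i X (apply_at j Y psi) = apply_at j Y (apply_at i X psi).
Proof.
move=> h; apply/ffunP => f; rewrite !ffunE.
rewrite (eq_bigr (fun a => \sum_(b < d) X (f i) a * Y (f j) b *
            psi (set_idx (set_idx f i a) j b))).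
  2: by move=> a _; rewrite ffunE mulr_sumr; apply: eq_bigr => b _;
        rewrite set_idx_ne // mulrA.
rewrite exchange_big; apply: eq_bigr => b _.
rewrite ffunE mulr_sumr; apply: eq_bigr => a _.
rewrite set_idx_ne 1?eq_sym // mulrA [X _ _ * _]mulrC set_idx_C //.
Qed.

Lemma apply_at_sumT i X (M : nat) (chi : 'I_M -> tensor F n d) :
  apply_at i X (\sum_(m < M) chi m) = \sum_(m < M) apply_at i X (chi m).
Proof.
apply/ffunP => f; rewrite !ffunE sum_ffunE.
rewrite (eq_bigr (fun j => \sum_(m < M) X (f i) j * chi m (set_idx f i j))).
  2: by move=> j _; rewrite sum_ffunE mulr_sumr.
rewrite exchange_big; apply: eq_bigr => m _; by rewrite ffunE.
Qed.

Lemma apply_at_prod i Y (v : 'I_n -> 'cV[F]_d) :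
  apply_at i Y (prod_tensor v) =
  prod_tensor (fun j => if j == i then Y *m v j else v j).
Proof.
apply/ffunP => f; rewrite !ffunE (bigD1 i) //= eqxx mxE mulr_suml.
apply: eq_bigr => l _; rewrite ffunE (bigD1 i) //= set_idx_at mulrA; congr (_ * _).
by apply: eq_bigr => k hk; rewrite (negbTE hk) set_idx_ne // eq_sym.
Qed.

Lemma permute_set (s : 'S_n) f i j :
  set_idx (permute_idx s f) i j = permute_idx s (set_idx f (s i) j).
Proof.
apply/ffunP => k; rewrite !ffunE.
by rewrite (inj_eq perm_inj).
Qed.

Lemma apply_at_perm i X psi (s : 'S_n) f : symmetric_tensor psi ->
  apply_at i X psi (permute_idx s f) = apply_at (s i) X psi f.
Proof.
move=> hs; rewrite !ffunE; apply: eq_bigr => j _.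
by rewrite permute_set hs.
Qed.

End Tensor.
Section Tensor2.
Variable F : comNzRingType.
Variables n d : nat.
Implicit Types (psi chi : tensor F n d) (X Y : 'M[F]_d) (f g : idx n d).

Lemma apply_at0 i psi : apply_at i 0 psi = [ffun=> 0].
Proof.
apply/ffunP => f; rewrite !ffunE big1 // => j _; by rewrite mxE mul0r.
Qed.

Definition basis_vec chi (j0 : 'I_n) g (k : 'I_n) : 'cV[F]_d :=
  if k == j0 then chi g *: delta_mx (g k) 0 else delta_mx (g k) 0.

Lemma prod_basis chi j0 g f :
  prod_tensor (basis_vec chi j0 g) f =
  chi g * \prod_(k < n) ((f k == g k) && (0 == 0 :> 'I_1))%:R.
Proof.
rewrite ffunE (bigD1 j0) //= /basis_vec eqxx.
rewrite [in RHS](bigD1 j0) //= mxE mxE mulrA; congr (_ * _).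
by apply: eq_bigr => k hk; rewrite (negbTE hk) mxE.
Qed.

Lemma tensor_expand chi (j0 : 'I_n) :
  exists M (v : 'I_M -> 'I_n -> 'cV[F]_d), chi = \sum_(m < M) prod_tensor (v m).
Proof.
exists #|(predT : pred (idx n d))|, (fun m => basis_vec chi j0 (enum_val m)).
rewrite -(big_enum_val (A := predT) (fun g => prod_tensor (basis_vec chi j0 g))).
apply/ffunP => f; rewrite sum_ffunE.
rewrite (eq_bigl (fun g => true)); last by move=> g; rewrite inE.
rewrite (bigD1 f) //= big1 ?addr0.
  rewrite prod_basis big1 ?mulr1 // => k _; by rewrite !eqxx.
move=> g hg; rewrite prod_basis.
case: (pickP (fun k => f k != g k)) => [k hk|H].
  by rewrite (bigD1 k) //= (negbTE hk) /= mul0r mulr0.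
case/eqP: hg; apply/ffunP => k; by move/negbFE/eqP: (H k).
Qed.

Lemma tensor_power_iter (G : 'cV[F]_d -> Prop) (P : 'M[F]_d) chi (j0 : 'I_n) :
  (forall w, G (P *m w)) -> (forall i, apply_at i P chi = chi) ->
  in_tensor_power G chi.
Proof.
move=> hG hP.
suff H : forall m0, (m0 <= n)%N -> exists M (v : 'I_M -> 'I_n -> 'cV[F]_d),
   (forall m (j : 'I_n), (j < m0)%N -> G (v m j)) /\
   chi = \sum_(m < M) prod_tensor (v m).
  have [M [v [h1 h2]]] := H n (leqnn n).
  by exists M, v; split => // m k; apply: h1.
elim=> [_|m0 IH lt].
  have [M [v hv]] := tensor_expand chi j0.
  by exists M, v; split.
have [M [v [h1 h2]]] := IH (ltnW lt).
pose i := Ordinal lt.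
exists M, (fun m j => if j == i then P *m v m j else v m j); split.
  move=> m j hj; case: (eqVneq j i) => [_|ne]; first exact: hG.
  apply: h1; rewrite ltnS leq_eqVlt in hj; case/orP: hj => // /eqP hj.
  by case/eqP: ne; apply: val_inj.
rewrite -{1}(hP i) h2 apply_at_sumT; apply: eq_bigr => m _.
by rewrite apply_at_prod.
Qed.

End Tensor2.

Section Horner.
Variable F : comNzRingType.
Variables n d' : nat.

Lemma apply_at_horner (B : 'M[F]_d'.+1) (i0 : 'I_n) (q : {poly F}) :
  forall psi : tensor F n d'.+1,
  (forall j, apply_at j B psi = apply_at i0 B psi) ->
  forall j, apply_at j (horner_mx B q) psi = apply_at i0 (horner_mx B q) psi.
Proof.
elim/poly_ind: q => [|q c IH] psi hpsi j.
  by rewrite rmorph0 !apply_at0.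
rewrite rmorphD rmorphM /= horner_mx_X horner_mx_C !apply_atD !apply_at_scalar.
congr (_ + _).
rewrite -mulmxE -!apply_at_mul hpsi IH //.
move=> j'; case: (eqVneq j' i0) => [->//|ne].
by rewrite apply_at_comm // hpsi.
Qed.

End Horner.
Section Spectral.
Variable K : closedFieldType.
Variables d' p : nat.
Variable B : 'M[K]_d'.+1.
Variable lam : 'I_p -> K.
Hypothesis lam_inj : injective lam.
Hypothesis lam_ev : forall a, eigenvalue B a -> exists k, a = lam k.

Definition Ep (k : 'I_p) : {poly K} := ('X - (lam k)%:P) ^+ d'.+1.
Definition Rp : {poly K} := \prod_k Ep k.
Definition Qp (k : 'I_p) : {poly K} := \prod_(l | l != k) Ep l.

Lemma prod_dvd (r : seq K) : (forall z, z \in r -> exists k, z = lam k) ->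
  \prod_(z <- r) ('X - z%:P) %| (\prod_k ('X - (lam k)%:P)) ^+ size r.
Proof.
elim: r => [|z r IH] h; first by rewrite big_nil dvd1p.
rewrite big_cons /= exprS; apply: dvdp_mul; last first.
  by apply: IH => y hy; apply: h; rewrite inE hy orbT.
have [k ->] := h z (mem_head z r).
by rewrite (bigD1 k) //= dvdp_mulr.
Qed.

Lemma annih : horner_mx B Rp = 0.
Proof.
have [r hr] := closed_field_poly_normal (char_poly B).
rewrite (monicP (char_poly_monic B)) scale1r in hr.
have sz : size r = d'.+1.
  by have := size_char_poly B; rewrite hr size_prod_XsubC => -[].
have hroot : forall z, z \in r -> exists k, z = lam k.
  move=> z hz; apply: lam_ev; rewrite eigenvalue_root_char hr root_prod_XsubC //.
have dv : char_poly B %| Rp.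
  by rewrite hr /Rp /Ep prodrXl -sz prod_dvd.
have [q ->] := dvdpP _ _ dv.
by rewrite rmorphM /= Cayley_Hamilton mulr0.
Qed.

Definition Rm (m : nat) : {poly K} := \prod_(l : 'I_p | (l < m)%N) Ep l.
Definition Qm (m : nat) (k : 'I_p) : {poly K} :=
  \prod_(l : 'I_p | (l < m)%N && (l != k)) Ep l.

Lemma helper (m : nat) (t : 'I_p) (ht : val t = m) (l : 'I_p) :
  ((l < m.+1)%N && (l != t)) = (l < m)%N.
Proof. by rewrite -val_eqE /= ht ltnS; case: ltngtP. Qed.

Lemma bezout_prefix m : (m <= p)%N -> exists (a : 'I_p -> {poly K}) c,
  \sum_(k : 'I_p | (k < m)%N) a k * Qm m k + c * Rm m = 1.
Proof.
elim: m => [_|m IH lt].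
  exists (fun _ => 0), 1; rewrite big_pred0 // /Rm big_pred0 //.
  by rewrite add0r mulr1.
have [a [c hIH]] := IH (ltnW lt).
pose t := Ordinal lt.
have ht : val t = m by [].
have f1 : Rm m.+1 = Ep t * Rm m.
  rewrite /Rm (bigD1 t) /= ?ltnSn //; congr (_ * _).
  by apply: eq_bigl => l; rewrite helper.
have f2 : forall k : 'I_p, (k < m)%N -> Qm m.+1 k = Ep t * Qm m k.
  move=> k hk; rewrite /Qm (bigD1 t) /=; last first.
    rewrite ltnSn /= -val_eqE /=; by case: ltngtP hk.
  congr (_ * _); apply: eq_bigl => l.
  by rewrite -andbA [(l != k) && _]andbC andbA helper.
have f3 : Qm m.+1 t = Rm m by apply: eq_bigl => l; rewrite helper.
have cop : coprimep (Ep t) (Rm m).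
  apply: coprimep_expl; rewrite coprimep_sym coprimep_XsubC.
  rewrite /root /Rm horner_prod; apply/prodf_neq0 => l hl.
  rewrite /Ep horner_exp hornerXsubC expf_neq0 // subr_eq0.
  apply/eqP => /lam_inj e; move: hl; by rewrite -e ht ltnn.
have [[u1 u2] /= hu] := Bezout_eq1_coprimepP _ _ cop.
exists (fun k => if k == t then u2 else u1 * a k), (u1 * c).
rewrite (bigD1 t) /= ?ltnSn // eqxx f3.
rewrite (eq_bigl (fun k : 'I_p => (k < m)%N)); last by move=> l; rewrite helper.
rewrite (eq_bigr (fun k => u1 * Ep t * (a k * Qm m k))); last first.
  move=> k hk; rewrite f2 //.
  have -> : (k == t) = false by apply/negbTE; rewrite -val_eqE /=; case: ltngtP hk.
  ring.
rewrite -mulr_sumr f1.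
transitivity (u1 * Ep t * (\sum_(k : 'I_p | (k < m)%N) a k * Qm m k + c * Rm m) + u2 * Rm m).
  ring.
by rewrite hIH mulr1 hu.
Qed.

Lemma bezout_full : exists (a : 'I_p -> {poly K}) c,
  \sum_k a k * Qp k + c * Rp = 1.
Proof.
have [a [c h]] := bezout_prefix p (leqnn p).
exists a, c; rewrite -h /Rp /Rm; congr (_ + _ * _).
  apply: eq_big => [k|k _]; first by rewrite ltn_ord.
  congr (_ * _); apply: eq_bigl => l; by rewrite ltn_ord.
by apply: eq_bigl => l; rewrite ltn_ord.
Qed.

Lemma spectral_proj : exists P : 'I_p -> 'M[K]_d'.+1,
  [/\ (forall k, exists q, P k = horner_mx B q), \sum_k P k = 1,
      (forall k l, k != l -> P k * P l = 0) &
      (forall k, (B - (lam k)%:M) ^+ d'.+1 * P k = 0)].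
Proof.
have [a [c hb]] := bezout_full.
have hR : forall k, Rp = Ep k * Qp k by move=> k; rewrite /Rp (bigD1 k).
exists (fun k => horner_mx B (a k * Qp k)); split.
- by move=> k; exists (a k * Qp k).
- rewrite -rmorph_sum.
  have -> : \sum_k a k * Qp k = 1 - c * Rp by rewrite -hb addrK.
  by rewrite rmorphB rmorph1 rmorphM /= annih mulr0 subr0.
- move=> k l hkl; rewrite -rmorphM.
  have hQ : Qp l = Ep k * \prod_(j | (j != l) && (j != k)) Ep j.
    by rewrite /Qp (bigD1 k) // eq_sym.
  have -> : a k * Qp k * (a l * Qp l) =
     (a k * a l * \prod_(j | (j != l) && (j != k)) Ep j) * Rp.
    by rewrite hQ (hR k); ring.
  by rewrite rmorphM /= annih mulr0.
- move=> k.
  have -> : (B - (lam k)%:M) ^+ d'.+1 = horner_mx B (Ep k).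
    by rewrite /Ep rmorphXn rmorphB /= horner_mx_X horner_mx_C.
  rewrite -rmorphM.
  have -> : Ep k * (a k * Qp k) = a k * Rp by rewrite (hR k); ring.
  by rewrite rmorphM /= annih mulr0.
Qed.

End Spectral.

Theorem theorem4 (R : realType) (n d p : nat) (hn : (2 <= n)%N)
  (B : 'M[R[i]]_d) (lam : 'I_p -> R[i]) (lam_inj : injective lam)
  (lam_spec : forall a : R[i], eigenvalue B a <-> exists k : 'I_p, a = lam k)
  (psi : tensor R[i] n d) :
  symmetric_tensor psi ->
  symmetric_tensor (apply_at (Ordinal (ltnW hn)) B psi) ->
  exists phi : 'I_p -> tensor R[i] n d,
    (forall k : 'I_p, in_sym_power (gen_eigenspace B (lam k)) (phi k)) /\
    psi = \sum_(k < p) phi k.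
Proof.
move=> hs hB.
set i0 := Ordinal (ltnW hn) in hB *.
case: d => [|d'] in B psi lam_spec hs hB *.
  exists (fun _ => [ffun=> 0]); split.
    move=> k; split.
      exists 0%N, (fun _ _ => 0); split; first by case.
      by rewrite big_ord0; apply/ffunP => f; rewrite !ffunE.
    by move=> s f; rewrite !ffunE.
  apply/ffunP => f; by case: (f i0).
have C : forall j, apply_at j B psi = apply_at i0 B psi.
  move=> j; apply/ffunP => f.
  have E := apply_at_perm _ _ _ i0 B psi (tperm i0 j) f hs.
  by rewrite tpermL in E; rewrite -E hB.
have lam_ev : forall a, eigenvalue B a -> exists k, a = lam k.
  by move=> a h; apply/lam_spec.
have [P [hpoly hsum horth heig]] := spectral_proj _ _ _ _ _ lam_inj lam_ev.
have hPP : forall k, P k *m P k = P k.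
  move=> k; rewrite mulmxE -{3}(mulr1 (P k)) -hsum mulr_sumr (bigD1 k) //=.
  by rewrite big1 ?addr0 // => l hl; apply: horth; rewrite eq_sym.
have hH : forall k j, apply_at j (P k) psi = apply_at i0 (P k) psi.
  by move=> k j; have [q ->] := hpoly k; apply: apply_at_horner.
exists (fun k => apply_at i0 (P k) psi); split.
  move=> k; split.
    apply: (tensor_power_iter _ _ _ _ (P k) _ i0).
      move=> w; exists d'.+1; rewrite mulmxA.
      by have := heig k; rewrite -mulmxE => ->; rewrite mul0mx.
    move=> j; case: (eqVneq j i0) => [->|ne]; first by rewrite apply_at_mul hPP.
    by rewrite apply_at_comm // hH apply_at_mul hPP.
  by move=> s f; rewrite apply_at_perm // hH.
rewrite -apply_at_sumX hsum -idmxE apply_at_scalar.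
by apply/ffunP => f; rewrite ffunE mul1r.
Qed.
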